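(* Let $G$ be a connected Lie group with identity $e$ and consider a discrete-time linear control system on $G$ with control range $U\subset\mathbb{R}^m$ a compact neighborhood of $0$. Then for all $k,k_1,k_2\in\mathbb{N}$ and $g\in G$: (1) $\mathcal{R}_k=\mathcal{R}_{\le k}$; (2) if $k_1\le k_2$ then $\mathcal{R}_{k_1}\subset\mathcal{R}_{k_2}$; (3) $\mathcal{R}_k(g)=\mathcal{R}_k\, f_0^k(g)$; (4) $\mathcal{R}_{k_1+k_2}=\mathcal{R}_{k_1}f_0^{k_1}(\mathcal{R}_{k_2})=\mathcal{R}_{k_2}f_0^{k_2}(\mathcal{R}_{k_1})$; (5) for every control $u$, $\varphi(k,\mathcal{R}(g),u)\subset\mathcal{R}(g)$; (6) $e\in\mathrm{int}\,\mathcal{R}$ if and only if $\mathcal{R}$ is open.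
   Context: A discrete-time linear control system on $G$ is given by $f:G\times U\to G$, $f_u:=f(\cdot,u)$, such that $f_0$ is an automorphism of $G$ and $f_u(g)=f_u(e)\cdot f_0(g)$ for all $g\in G,u\in U$. Controls are $u=(u_i)_{i\in\mathbb{N}_0}\in U^{\mathbb{N}_0}$, solutions $\varphi(0,g,u)=g$, $\varphi(k,g,u)=f_{u_{k-1}}\circ\cdots\circ f_{u_0}(g)$. $\mathcal{R}_k(g)=\{\varphi(k,g,u):u\in U^{\mathbb{N}_0}\}$, $\mathcal{R}(g)=\bigcup_{k\in\mathbb{N}}\mathcal{R}_k(g)$, $\mathcal{R}_k=\mathcal{R}_k(e)$, $\mathcal{R}=\mathcal{R}(e)$, $\mathcal{R}_{\le k}=\bigcup_{t\le k}\mathcal{R}_t$. For sets $A,B\subset G$, $AB=\{ab:a\in A,b\in B\}$. *)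

(* Defs.v *)
From HB Require Import structures.
From mathcomp Require Import all_boot all_order all_algebra.
From mathcomp Require Import all_classical all_reals all_analysis.
Set Implicit Arguments. Unset Strict Implicit. Unset Printing Implicit Defensive.
Import Order.TTheory GRing.Theory Num.Theory.
Import numFieldNormedType.Exports.
Local Open Scope classical_set_scope.

Definition is_topgroup (G : topologicalType) (mul : G -> G -> G)
  (inv : G -> G) (e : G) : Prop :=
  [/\ (forall x y z, mul x (mul y z) = mul (mul x y) z),
      (forall x, mul e x = x /\ mul x e = x),
      (forall x, mul (inv x) x = e /\ mul x (inv x) = e),
      continuous (fun p : G * G => mul p.1 p.2) &
      continuous inv].

Definition is_automorphism (G : topologicalType) (mul : G -> G -> G)
  (phi : G -> G) : Prop :=
  [/\ (forall x y, phi (mul x y) = mul (phi x) (phi y)),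
      continuous phi &
      exists psi : G -> G, [/\ cancel phi psi, cancel psi phi & continuous psi]].

Definition linear_system (G : topologicalType) (mul : G -> G -> G) (e : G)
  (Ut : zmodType) (U : set Ut) (f : G -> Ut -> G) : Prop :=
  is_automorphism mul (fun g => f g 0%R) /\
  forall g u, U u -> f g u = mul (f e u) (f g 0%R).

Definition control (Ut : Type) (U : set Ut) (u : nat -> Ut) : Prop :=
  forall i, U (u i).

Fixpoint sol (G Ut : Type) (f : G -> Ut -> G) (k : nat) (g : G) (u : nat -> Ut) : G :=
  match k with
  | 0 => g
  | k'.+1 => f (sol f k' g u) (u k')
  end.

Definition reach_k (G Ut : Type) (U : set Ut) (f : G -> Ut -> G) (k : nat) (g : G) : set G :=
  [set sol f k g u | u in control U].

Definition reach (G Ut : Type) (U : set Ut) (f : G -> Ut -> G) (g : G) : set G :=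
  \bigcup_(k in [set k : nat | (0 < k)%N]) reach_k U f k g.

Definition reach_le (G Ut : Type) (U : set Ut) (f : G -> Ut -> G) (e : G) (k : nat) : set G :=
  \bigcup_(t in [set t : nat | (0 < t <= k)%N]) reach_k U f t e.

Definition setmul (G : Type) (mul : G -> G -> G) (A B : set G) : set G :=
  [set mul a b | a in A & b in B].

(* Main.v *)
Require Import Defs.
From HB Require Import structures.
From mathcomp Require Import all_boot all_order all_algebra.
From mathcomp Require Import all_classical all_reals all_analysis.
Import Order.TTheory GRing.Theory Num.Theory.
Import numFieldNormedType.Exports.
Local Open Scope classical_set_scope.
Set Implicit Arguments. Unset Strict Implicit.

Lemma sol_ext (G Ut : Type) (f : G -> Ut -> G) k g u v :
  (forall i, (i < k)%N -> u i = v i) -> sol f k g u = sol f k g v.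
Proof.
elim: k => [//|k IH] H /=; rewrite IH; last by move=> i hi; apply: H; exact: ltnW.
by rewrite H.
Qed.

Lemma sol_split (G Ut : Type) (f : G -> Ut -> G) a b g u :
  sol f (a + b) g u = sol f a (sol f b g u) (fun i => u (i + b)).
Proof. by elim: a => [//|a IH]; rewrite addSn /= IH. Qed.

Definition catc (Ut : Type) (b : nat) (w v : nat -> Ut) : nat -> Ut :=
  fun i => if (i < b)%N then w i else v (i - b)%N.

Lemma catc_control (Ut : Type) (U : set Ut) b w v :
  control U w -> control U v -> control U (catc b w v).
Proof. by move=> hw hv i; rewrite /catc; case: ifP. Qed.

Lemma sol_catc (G Ut : Type) (f : G -> Ut -> G) a b g w v :
  sol f (a + b) g (catc b w v) = sol f a (sol f b g w) v.
Proof.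
rewrite sol_split (@sol_ext _ _ f b g (catc b w v) w); last first.
  by move=> i hi; rewrite /catc hi.
apply: sol_ext => i _; rewrite /catc.
by rewrite ltnNge leq_addl /= addnK.
Qed.

Lemma shift_control (Ut : Type) (U : set Ut) b u :
  control U u -> control U (fun i => u (i + b)%N).
Proof. by move=> h i. Qed.

Section Alg.
Variables (G Ut : Type) (mul : G -> G -> G) (inv : G -> G) (e : G) (U : set Ut)
  (z0 : Ut) (f : G -> Ut -> G).
Hypothesis massoc : forall x y z, mul x (mul y z) = mul (mul x y) z.
Hypothesis mid : forall x, mul e x = x /\ mul x e = x.
Hypothesis minv : forall x, mul (inv x) x = e /\ mul x (inv x) = e.
Hypothesis f0hom : forall x y, f (mul x y) z0 = mul (f x z0) (f y z0).
Hypothesis flin : forall g u, U u -> f g u = mul (f e u) (f g z0).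
Hypothesis Uz0 : U z0.

Lemma f0e : f e z0 = e.
Proof.
have h : f e z0 = mul (f e z0) (f e z0) by rewrite -f0hom (proj1 (mid e)).
have := congr1 (mul (inv (f e z0))) h.
by rewrite massoc (proj1 (minv _)) (proj1 (mid _)).
Qed.

Lemma sol_zero k : sol f k e (fun _ => z0) = e.
Proof. by elim: k => [//|k IH] /=; rewrite IH f0e. Qed.

Lemma sol_transl k g u : control U u ->
  sol f k g u = mul (sol f k e u) (iter k (fun x => f x z0) g).
Proof.
move=> hu; elim: k => [|k IH] /=; first by rewrite (proj1 (mid _)).
by rewrite flin // IH f0hom massoc -flin.
Qed.

Lemma reach_mono t k : (t <= k)%N -> reach_k U f t e `<=` reach_k U f k e.
Proof.
move=> htk x [w hw <-].
exists (catc (k - t) (fun _ => z0) w); first exact: catc_control.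
by rewrite -{1}(subnKC htk) sol_catc sol_zero.
Qed.

Lemma reach_split a b :
  reach_k U f (a + b) e =
  setmul mul (reach_k U f a e) (iter a (fun x => f x z0) @` reach_k U f b e).
Proof.
apply/seteqP; split => x.
  case=> u hu <-; rewrite sol_split.
  rewrite (sol_transl _ _ (shift_control b hu)).
  exists (sol f a e (fun i => u (i + b)%N)); first by exists (fun i => u (i + b)%N).
  exists (iter a (fun x => f x z0) (sol f b e u)) => //.
  by exists (sol f b e u) => //; exists u.
case=> y [v hv <-] [z [zz [w hw <-]] <-] <-.
exists (catc b w v); first exact: catc_control.
by rewrite sol_catc (sol_transl _ _ hv).
Qed.

End Alg.

Lemma reach_step (G Ut : Type) (U : set Ut) (f : G -> Ut -> G) g k u y :
  control U u -> reach U f g y -> reach U f g (sol f k y u).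
Proof.
move=> hu [j /= hj [w hw <-]].
exists (k + j)%N; first by rewrite /= addn_gt0 hj orbT.
exists (catc j w u); first exact: catc_control.
by rewrite sol_catc.
Qed.

Lemma cont_iter (T : topologicalType) (h : T -> T) n :
  continuous h -> continuous (iter n h).
Proof.
move=> hc; elim: n => [|n IH] x.
  by change ((fun y => y) @ x --> x); exact: cvg_id.
change ((h \o iter n h) @ x --> h (iter n h x)).
exact: (continuous_comp (IH x) (hc _)).
Qed.

Lemma iter_cancel (T : Type) (p q : T -> T) n : cancel q p -> cancel (iter n q) (iter n p).
Proof.
move=> c y; elim: n y => [//|n IH] y.
by rewrite iterSr /= c IH.
Qed.

Theorem proposition2p12 (G : topologicalType) (mul : G -> G -> G) (inv : G -> G) (e : G)
  (R : realType) (m : nat) (U : set 'rV[R]_m) (f : G -> 'rV[R]_m -> G) :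
  is_topgroup mul inv e -> hausdorff_space G -> connected [set: G] ->
  compact U -> nbhs (0%R : 'rV[R]_m) U ->
  linear_system mul e U f ->
  let f0 := fun g => f g 0%R in
  forall (k k1 k2 : nat) (g : G), (0 < k)%N -> (0 < k1)%N -> (0 < k2)%N ->
  (reach_k U f k e = reach_le U f e k) /\
  [/\ ((k1 <= k2)%N -> reach_k U f k1 e `<=` reach_k U f k2 e),
      reach_k U f k g = setmul mul (reach_k U f k e) [set iter k f0 g],
      reach_k U f (k1 + k2) e
        = setmul mul (reach_k U f k1 e) (iter k1 f0 @` reach_k U f k2 e)
      /\ reach_k U f (k1 + k2) e
        = setmul mul (reach_k U f k2 e) (iter k2 f0 @` reach_k U f k1 e),
      (forall u : nat -> 'rV[R]_m, control U u ->
         (fun x => sol f k x u) @` reach U f g `<=` reach U f g) &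
      (interior (reach U f e) e <-> open (reach U f e))].
Proof.
move=> [Ha Hid Hinv Hmc Hic] _ _ _ HU [[Hhom Hcont [psi [c1 c2 Hpc]]] Hlin] f0.
rewrite /f0 => {f0} k k1 k2 g hk hk1 hk2.
have U0 : U 0%R := nbhs_singleton HU.
have Ht := sol_transl Ha Hid Hhom Hlin.
split.
  apply/seteqP; split => x.
    by move=> Hx; exists k => //=; rewrite hk leqnn.
  move=> [t /= Htk Hx]; case/andP: Htk => ht htk.
  exact: (reach_mono Ha Hid Hinv Hhom U0 htk Hx).
split.
- exact: (reach_mono Ha Hid Hinv Hhom U0).
- apply/seteqP; split => x.
    case=> u hu <-; rewrite Ht //.
    exists (sol f k e u); first by exists u.
    by exists (iter k (fun g => f g 0%R) g).
  case=> y [u hu <-] [z ->] <-.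
  by exists u => //; rewrite Ht.
- split; first exact: (reach_split Ha Hid Hhom Hlin).
  by rewrite addnC; exact: (reach_split Ha Hid Hhom Hlin).
- by move=> u hu z [x Hx <-]; apply: reach_step.
- have He : reach U f e e.
    exists 1%N => //; exists (fun _ => 0%R) => //=.
    exact: (f0e Ha Hid Hinv Hhom).
  split; last by rewrite openE => Ho; apply: Ho.
  move=> Hint; rewrite openE => x [j hj [u hu <-]].
  set x0 := sol f j e u.
  pose h z := iter j psi (mul (inv x0) z).
  have cl : forall c, continuous (fun z => mul c z).
    move=> c z.
    apply: (continuous_comp (f := fun z => (c, z)) (g := fun p : G * G => mul p.1 p.2)).
      by apply: cvg_pair; [exact: cvg_cst | exact: cvg_id].
    exact: Hmc.
  have hc : h @ x0 --> h x0.
    rewrite /h; change ((iter j psi \o (fun z => mul (inv x0) z)) @ x0 --> iter j psi (mul (inv x0) x0)).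
    apply: continuous_comp; [exact: cl | exact: cont_iter].
  have hx0 : h x0 = e.
    rewrite /h (proj1 (Hinv _)).
    have pe : psi e = e.
      by rewrite -{1}(f0e Ha Hid Hinv Hhom) c1.
    by elim: (j) => [//|i IH]; rewrite /= IH pe.
  rewrite hx0 in hc.
  have H1 : nbhs x0 (h @^-1` reach U f e) := hc (reach U f e) Hint.
  rewrite /interior /=.
  apply: (filterS _ H1) => z /= Hz.
  have := reach_step j hu Hz.
  rewrite Ht // (iter_cancel j c2) Ha (proj2 (Hinv _)) (proj1 (Hid _)).
  done.
Qed.
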